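(* A hypergraph $H$ is acyclic if and only if it is Vorob'ev regular.
   Context: A hypergraph $H=(V,E)$ has a finite vertex set $V$ and a set $E$ of nonempty subsets of $V$. Acyclicity: the reduction $R(H)$ keeps only hyperedges not properly contained in another; $H$ is reduced if $H=R(H)$. For $W\subseteq V$, $H[W]=(W,\{X\cap W:X\in E\}\setminus\{\emptyset\})$. For a reduced $H$ and distinct hyperedges $X,Y$ with $X\cap Y\neq\emptyset$, $X\cap Y$ is an articulation set if $R(H[V\setminus(X\cap Y)])$ has more connected components than $H$. A reduced $H$ is acyclic if for every $W\subseteq V$ such that $R(H[W])$ is connected with more than one hyperedge, $R(H[W])$ has an articulation set; an arbitrary $H$ is acyclic if $R(H)$ is (standard $\alpha$-acyclicity). Vorob'ev regularity: a complex is a hypergraph whose set of hyperedges is closed under taking subsets; the downward closure of $H$ is the complex whose hyperedges are all subsets of hyperedges of $H$. In a complex $\mathcal K$, a hyperedge is maximal if not a proper subset of another hyperedge. For distinct maximal hyperedges $X,Y$, $X$ yields a maximal intersection with $Y$ if there is no maximal hyperedge $Z\notin\{X,Y\}$ with $X\cap Y\subsetneq X\cap Z$. A maximal hyperedge $X$ is extreme if all maximal intersections of $X$ are equal. The proper vertices of an extreme $X$ are those belonging to no other maximal hyperedge; the normal subcomplex corresponding to $X$ consists of all hyperedges of $\mathcal K$ disjoint from the proper vertices of $X$. A normal series is a sequence $\mathcal K=\mathcal K_0\supset\mathcal K_1\supset\cdots\supset\mathcal K_r$ with each $\mathcal K_{\ell+1}$ a normal subcomplex of $\mathcal K_\ell$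 ($0\le\ell<r$) and $\mathcal K_r$ having no extreme hyperedge. $\mathcal K$ is regular if it has a normal series whose last term is the complex without vertices. $H$ is Vorob'ev regular if its downward closure is regular. *)

(* Defs.v *)
From mathcomp Require Import all_boot.
Set Implicit Arguments. Unset Strict Implicit. Unset Printing Implicit Defensive.

Section Hyper.
Variable T : finType.

Definition hypergraph (V : {set T}) (E : {set {set T}}) : bool :=
  [forall X in E, (X != set0) && (X \subset V)].

Definition red (E : {set {set T}}) : {set {set T}} :=
  [set X in E | [forall Y in E, ~~ (X \proper Y)]].

Definition reduced (E : {set {set T}}) : bool := red E == E.

Definition ind (W : {set T}) (E : {set {set T}}) : {set {set T}} :=
  [set X :&: W | X in E] :\ set0.

Definition adj (E : {set {set T}}) : rel T :=
  fun x y => [exists X in E, (x \in X) && (y \in X)].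

Definition comps (V : {set T}) (E : {set {set T}}) : {set {set T}} :=
  [set [set y in V | connect (adj E) x y] | x in V].

Definition ncomp (V : {set T}) (E : {set {set T}}) : nat := #|comps V E|.

Definition hconnected (V : {set T}) (E : {set {set T}}) : bool :=
  ncomp V E == 1.

Definition articulation (V : {set T}) (E : {set {set T}}) (X Y : {set T}) : bool :=
  [&& X \in E, Y \in E, X != Y, X :&: Y != set0 &
      ncomp V E < ncomp (V :\: (X :&: Y)) (red (ind (V :\: (X :&: Y)) E))].

Definition has_articulation (V : {set T}) (E : {set {set T}}) : bool :=
  [exists X, exists Y, articulation V E X Y].

Definition acyclic_reduced (V : {set T}) (E : {set {set T}}) : Prop :=
  forall W : {set T}, W \subset V ->
    hconnected W (red (ind W E)) -> 1 < #|red (ind W E)| ->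
    has_articulation W (red (ind W E)).

Definition acyclic (V : {set T}) (E : {set {set T}}) : Prop :=
  acyclic_reduced V (red E).

(* A complex is represented by its set of hyperedges K (nonempty sets,
   closed under nonempty subsets); its vertices are those in some hyperedge. *)
Definition is_complex (K : {set {set T}}) : bool :=
  [forall X in K, (X != set0) &&
     [forall Y : {set T}, ((Y != set0) && (Y \subset X)) ==> (Y \in K)]].

Definition down_closure (E : {set {set T}}) : {set {set T}} :=
  [set Y : {set T} | (Y != set0) && [exists X in E, Y \subset X]].

Definition maximal (K : {set {set T}}) (X : {set T}) : bool :=
  (X \in K) && [forall Y in K, ~~ (X \proper Y)].

Definition maxint (K : {set {set T}}) (X Y : {set T}) : bool :=
  [&& maximal K X, maximal K Y, X != Y &
      ~~ [exists Z, [&& maximal K Z, Z != X, Z != Y &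
                        (X :&: Y) \proper (X :&: Z)]]].

Definition extreme (K : {set {set T}}) (X : {set T}) : bool :=
  maximal K X &&
  [forall Y, forall Y', (maxint K X Y && maxint K X Y') ==>
                        (X :&: Y == X :&: Y')].

Definition proper_vertices (K : {set {set T}}) (X : {set T}) : {set T} :=
  [set v in X | [forall Y, (maximal K Y && (Y != X)) ==> (v \notin Y)]].

Definition normal_sub (K : {set {set T}}) (X : {set T}) : {set {set T}} :=
  [set Y in K | [disjoint Y & proper_vertices K X]].

Definition normal_step : rel {set {set T}} :=
  fun K K' => [exists X, extreme K X && (K' == normal_sub K X)].

Definition no_extreme (K : {set {set T}}) : bool := [forall X, ~~ extreme K X].

(* a normal series K = K_0 ⊃ K_1 ⊃ ... ⊃ K_r, given as K :: s *)
Definition normal_series (K : {set {set T}}) (s : seq {set {set T}}) : bool :=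
  path normal_step K s && no_extreme (last K s).

Definition regular (K : {set {set T}}) : Prop :=
  exists s : seq {set {set T}}, normal_series K s && (last K s == set0).

Definition vorobev_regular (E : {set {set T}}) : Prop :=
  regular (down_closure E).

End Hyper.

(* Main.v *)
Require Import Defs.
From mathcomp Require Import all_boot.
Set Implicit Arguments. Unset Strict Implicit. Unset Printing Implicit Defensive.

Definition antichain (T : finType) (M : {set {set T}}) :=
  forall X Y, X \in M -> Y \in M -> X \subset Y -> X = Y.
Definition nonemp (T : finType) (M : {set {set T}}) :=
  forall X, X \in M -> X != set0.
Definition ear (T : finType) (M : {set {set T}}) (X : {set T}) :=
  X \in M /\ exists Y, [/\ Y \in M, Y != X &
     forall Z, Z \in M -> Z != X -> X :&: Z \subset Y].

Lemma in_red (T : finType) (E : {set {set T}}) X :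
  X \in red E = (X \in E) && [forall Y in E, ~~ (X \proper Y)].
Proof. by rewrite inE. Qed.

Lemma red_subE (T : finType) (E : {set {set T}}) X : X \in red E -> X \in E.
Proof. by rewrite in_red => /andP[]. Qed.

Lemma red_max (T : finType) (E : {set {set T}}) X Y :
  X \in red E -> Y \in E -> X \subset Y -> X = Y.
Proof.
rewrite in_red => /andP[_ /forallP H] HY XY.
have := H Y; rewrite HY /= properEneq XY andbT negbK => /eqP //.
Qed.

Lemma red_anti (T : finType) (E : {set {set T}}) : antichain (red E).
Proof. move=> X Y HX HY; apply: red_max HX (red_subE HY). Qed.

Lemma red_cover (T : finType) (E : {set {set T}}) X :
  X \in E -> exists2 Y, Y \in red E & X \subset Y.
Proof.
move=> HX.
have HP : (X \in E) && (X \subset X) by rewrite HX subxx.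
case: (@arg_maxnP _ X (fun Y : {set T} => (Y \in E) && (X \subset Y)) (fun Y : {set T} => #|Y|) HP) => Y /andP[HYE XY] Hmax.
exists Y => //; rewrite in_red HYE; apply/forallP => Z; apply/implyP => HZ.
apply/negP => YZ.
have : #|Z| <= #|Y| by apply: Hmax; rewrite HZ (subset_trans XY) // proper_sub.
by rewrite leqNgt proper_card.
Qed.

Lemma red_id (T : finType) (M : {set {set T}}) : antichain M -> red M = M.
Proof.
move=> HA; apply/setP => X; rewrite in_red.
case HX: (X \in M) => //=; apply/forallP => Y; apply/implyP => HY.
rewrite properEneq negb_and negbK; case XY: (X \subset Y); last by rewrite orbT.
by rewrite (HA _ _ HX HY XY) eqxx.
Qed.

Lemma red_eq (T : finType) (E E' : {set {set T}}) :
  E' \subset E -> (forall X, X \in E -> exists2 Y, Y \in E' & X \subset Y) ->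
  red E = red E'.
Proof.
move=> sub Hc; apply/setP => X; apply/idP/idP => HX.
- have HXE := red_subE HX; case: (Hc _ HXE) => Y HY XY.
  have eXY := red_max HX (subsetP sub _ HY) XY; subst Y.
  rewrite in_red HY; apply/forallP => Z; apply/implyP => HZ.
  apply/negP => XZ; have := red_max HX (subsetP sub _ HZ) (proper_sub XZ).
  by move=> e; move: XZ; rewrite e properE subxx andbF.
- have HXE' := red_subE HX.
  rewrite in_red (subsetP sub _ HXE'); apply/forallP => Z; apply/implyP => HZ.
  apply/negP => XZ; case: (Hc _ HZ) => Z' HZ' ZZ'.
  have := red_max HX HZ' (subset_trans (proper_sub XZ) ZZ').
  move=> e; subst Z'.
  by move: XZ; rewrite properE ZZ' andbF.
Qed.

Lemma in_ind (T : finType) (W : {set T}) (E : {set {set T}}) Y :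
  reflect (Y != set0 /\ exists2 X, X \in E & Y = X :&: W) (Y \in ind W E).
Proof.
rewrite /ind; apply: (iffP setD1P) => -[H1 H2]; split => //; by apply/imsetP.
Qed.

Lemma ind_sub (T : finType) (W : {set T}) (E : {set {set T}}) Y :
  Y \in ind W E -> Y \subset W.
Proof. by case/in_ind => _ [X _ ->]; rewrite subsetIr. Qed.

Lemma red_ind_red (T : finType) (W : {set T}) (E : {set {set T}}) :
  red (ind W (red E)) = red (ind W E).
Proof.
symmetry; apply: red_eq.
- apply/subsetP => Y /in_ind [H1 [X HX eY]]; subst Y; apply/in_ind; split => //.
  by exists X => //; exact: (red_subE HX).
- move=> Y /in_ind [H1 [X HX eY]]; case: (red_cover HX) => X' HX' XX'.
  exists (X' :&: W); last by rewrite eY setSI.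
  apply/in_ind; split; last by exists X'.
  apply/negP => /eqP e; move: H1; rewrite eY; apply/negP; rewrite negbK.
  by rewrite -subset0 -e setSI.
Qed.

Lemma ind_ind (T : finType) (W W0 : {set T}) (E : {set {set T}}) :
  W \subset W0 -> ind W (ind W0 E) = ind W E.
Proof.
move=> sW; apply/setP => Y; apply/in_ind/in_ind => -[H1 [X HX eY]]; split => //.
- case/in_ind: HX => _ [X0 HX0 eX]; exists X0 => //.
  by rewrite eY eX -setIA (setIidPr sW).
- exists (X :&: W0); last by rewrite eY -setIA (setIidPr sW).
  apply/in_ind; split; last by exists X.
  apply/negP => /eqP e; move: H1; rewrite eY; apply/negP; rewrite negbK.
  by rewrite -subset0 -e setIS.
Qed.

Lemma red_ind_comp (T : finType) (W W0 : {set T}) (E : {set {set T}}) :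
  W \subset W0 -> red (ind W (red (ind W0 E))) = red (ind W E).
Proof. by move=> sW; rewrite red_ind_red ind_ind. Qed.

Lemma disjP (T : finType) (A B : {set T}) :
  reflect (forall x, x \in A -> x \notin B) [disjoint A & B].
Proof.
rewrite disjoints_subset; apply: (iffP subsetP) => H x /H; by rewrite inE.
Qed.

Lemma in_down (T : finType) (M : {set {set T}}) Y :
  reflect (Y != set0 /\ exists2 X, X \in M & Y \subset X) (Y \in down_closure M).
Proof.
rewrite inE; apply: (iffP andP) => -[H1 H2]; split => //.
- by case/existsP: H2 => X /andP[]; exists X.
- by case: H2 => X HX HY; apply/existsP; exists X; rewrite HX.
Qed.

Lemma down_red (T : finType) (E : {set {set T}}) :
  down_closure (red E) = down_closure E.
Proof.
apply/setP => Y; apply/in_down/in_down => -[H1 [X HX HY]]; split => //.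
- by exists X => //; exact: (red_subE HX).
- case: (red_cover HX) => X' HX' XX'; exists X' => //; exact: subset_trans XX'.
Qed.

Lemma down0 (T : finType) : down_closure (set0 : {set {set T}}) = set0.
Proof. by apply/setP => Y; apply/in_down; rewrite inE => -[_ [X]]; rewrite inE. Qed.

Lemma maximal_down (T : finType) (M : {set {set T}}) X :
  antichain M -> nonemp M -> maximal (down_closure M) X = (X \in M).
Proof.
move=> HA HN; apply/idP/idP.
- case/andP => /in_down [H1 [G HG XG]] /forallP H.
  have := H G; have -> : G \in down_closure M.
    by apply/in_down; split; [apply: HN | exists G].
  rewrite properEneq XG andbT negbK => /eqP -> //.
- move=> HX; apply/andP; split.
    by apply/in_down; split; [apply: HN | exists X].
  apply/forallP => Y; apply/implyP => /in_down [_ [G HG YG]].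
  apply/negP => XY.
  have e := HA _ _ HX HG (subset_trans (proper_sub XY) YG); subst G.
  by move: XY; rewrite properE YG andbF.
Qed.

Lemma ear_extreme (T : finType) (M : {set {set T}}) X :
  antichain M -> nonemp M -> ear M X -> extreme (down_closure M) X.
Proof.
move=> HA HN [HX [Y [HY YX HE]]].
have key : forall Z, maxint (down_closure M) X Z -> X :&: Z = X :&: Y.
  move=> Z /and4P[_ HZ ZX /negP Hno].
  rewrite maximal_down // in HZ.
  have ZX2 : Z != X by rewrite eq_sym.
  have sub : X :&: Z \subset X :&: Y by rewrite subsetI subsetIl (HE _ HZ ZX2).
  case: (eqVneq (X :&: Z) (X :&: Y)) => // ne.
  have YZ : Y != Z by apply/eqP => e; move: ne; rewrite e eqxx.
  exfalso; apply: Hno; apply/existsP; exists Y.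
  by rewrite maximal_down // HY YX YZ /= properEneq ne sub.
apply/andP; split; first by rewrite maximal_down.
apply/forallP => Z; apply/forallP => Z'; apply/implyP => /andP[H1 H2].
by rewrite (key _ H1) (key _ H2).
Qed.

Lemma single_extreme (T : finType) (X : {set T}) :
  X != set0 -> extreme (down_closure [set X]) X.
Proof.
move=> HX.
have HA : antichain [set X] by move=> A B /set1P -> /set1P ->.
have HN : nonemp [set X] by move=> A /set1P ->.
apply/andP; split; first by rewrite maximal_down // set11.
apply/forallP => Z; apply/forallP => Z'; apply/implyP => /andP[H1 _].
move/and4P: H1 => [_ HZ ZX _]; rewrite maximal_down // in HZ.
by move/set1P: HZ ZX => ->; rewrite eqxx.
Qed.

Lemma in_proper_vertices (T : finType) (K : {set {set T}}) X v :
  v \in proper_vertices K X =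
  (v \in X) && [forall Y, (maximal K Y && (Y != X)) ==> (v \notin Y)].
Proof. by rewrite inE. Qed.

Lemma normal_ear (T : finType) (M : {set {set T}}) X :
  antichain M -> nonemp M -> ear M X ->
  normal_sub (down_closure M) X = down_closure (M :\ X).
Proof.
move=> HA HN [HX [W [HW WX HE]]].
apply/setP => Y; rewrite inE; apply/andP/in_down.
- move=> [/in_down [H1 [G HG YG]] /disjP Hd]; split => //.
  case: (eqVneq G X) => [eGX|nGX]; last by exists G => //; rewrite !inE nGX.
  subst G; exists W; first by rewrite !inE WX.
  apply/subsetP => v Hv.
  have := Hd _ Hv; rewrite in_proper_vertices (subsetP YG _ Hv) /=.
  case/forallPn => Z; rewrite negb_imply negbK => /andP[/andP[HZ ZX] vZ].
  rewrite maximal_down // in HZ.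
  by apply: (subsetP (HE _ HZ ZX)); rewrite inE (subsetP YG _ Hv).
- move=> [H1 [G HG YG]]; case/setD1P: HG => GX HG; split.
    by apply/in_down; split => //; exists G.
  apply/disjP => v vY; rewrite in_proper_vertices negb_and; apply/orP; right.
  apply/forallPn; exists G; rewrite negb_imply negbK maximal_down // HG GX.
  exact: (subsetP YG).
Qed.

Lemma normal_single (T : finType) (X : {set T}) :
  X != set0 -> normal_sub (down_closure [set X]) X = set0.
Proof.
move=> HX.
have HA : antichain [set X] by move=> A B /set1P -> /set1P ->.
have HN : nonemp [set X] by move=> A /set1P ->.
apply/setP => Y; rewrite inE [RHS]inE; apply/negP => /andP[/in_down [H1 [G /set1P e YG]] /disjP Hd].
subst G; case/set0Pn: H1 => v vY.
have := Hd _ vY; rewrite in_proper_vertices (subsetP YG _ vY) /=.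
case/forallPn => Z; rewrite negb_imply negbK maximal_down // => /andP[/andP[/set1P -> ]].
by rewrite eqxx.
Qed.

Lemma extreme_ear (T : finType) (M : {set {set T}}) X :
  antichain M -> nonemp M -> extreme (down_closure M) X ->
  X \in M /\ (M = [set X] \/ ear M X).
Proof.
move=> HA HN /andP[HX Hext]; rewrite maximal_down // in HX; split => //.
case: (boolP [exists Y, (Y \in M) && (Y != X)]) => [/existsP [Y0 /andP[HY0 Y0X]]|Hn]; last first.
  left; apply/setP => Y; rewrite inE; apply/idP/eqP => [HY|->//].
  by apply/eqP; apply: contraR Hn => YX; apply/existsP; exists Y; rewrite HY.
right.
have star : forall Z, Z \in M -> Z != X -> exists Zs,
    X :&: Z \subset X :&: Zs /\ maxint (down_closure M) X Zs.
  move=> Z HZ ZX.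
  pose Q := fun Z' : {set T} => [&& Z' \in M, Z' != X & X :&: Z \subset X :&: Z'].
  have QZ : Q Z by rewrite /Q HZ ZX subxx.
  case: (@arg_maxnP _ Z Q (fun Z' => #|X :&: Z'|) QZ) => Zs /and3P[HZs ZsX sub] Hmax.
  exists Zs; split => //; apply/and4P; split; rewrite ?maximal_down // 1?eq_sym //.
  apply/negP => /existsP [Z'' /and4P[HZ'' Z''X _ pr]].
  rewrite maximal_down // in HZ''.
  have : #|X :&: Z''| <= #|X :&: Zs|.
    by apply: Hmax; rewrite /Q HZ'' Z''X (subset_trans sub) // proper_sub.
  by rewrite leqNgt proper_card.
case: (star _ HY0 Y0X) => Y [_ HmY].
have HY : Y \in M by case/and4P: HmY => _; rewrite maximal_down.
have YX : Y != X by case/and4P: HmY => _ _ H _; rewrite eq_sym.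
split => //; exists Y; split => // Z HZ ZX.
case: (star _ HZ ZX) => Zs [sub HmZ].
have := forallP (forallP Hext Zs) Y; rewrite HmZ HmY /= => /eqP e.
by apply: (subset_trans sub); rewrite e subsetIr.
Qed.

Inductive gyo (T : finType) : {set {set T}} -> Prop :=
| gyo0 : gyo set0
| gyo1 X : gyo [set X]
| gyoS M X : ear M X -> gyo (M :\ X) -> gyo M.

Lemma antichainD1 (T : finType) (M : {set {set T}}) X :
  antichain M -> antichain (M :\ X).
Proof. by move=> HA A B /setD1P[_ HAM] /setD1P[_ HB]; apply: HA. Qed.

Lemma nonempD1 (T : finType) (M : {set {set T}}) X :
  nonemp M -> nonemp (M :\ X).
Proof. by move=> HN A /setD1P[_ H]; apply: HN. Qed.

Lemma gyo_regular (T : finType) (M : {set {set T}}) :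
  antichain M -> nonemp M -> gyo M -> regular (down_closure M).
Proof.
move=> HA HN H; elim: H HA HN => {M}.
- by move=> _ _; exists [::]; rewrite /normal_series /= down0 eqxx andbT;
     apply/forallP => X; apply/negP => /andP[/andP[]]; rewrite inE.
- move=> X _ HN.
  have HX : X != set0 by apply: HN; rewrite set11.
  exists [:: set0]; rewrite /normal_series /= eqxx andbT andbT.
  apply/andP; split.
    apply/existsP; exists X; rewrite single_extreme //= normal_single //.
  by apply/forallP => Y; apply/negP => /andP[/andP[]]; rewrite inE.
- move=> M X Hear _ IH HA HN.
  case: (IH (antichainD1 (X:=X) HA) (nonempD1 (X:=X) HN)) => s /andP[/andP[Hp Hne] Hl].
  exists (down_closure (M :\ X) :: s); rewrite /normal_series /= Hp Hne Hl !andbT.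
  apply/existsP; exists X; rewrite ear_extreme //= normal_ear //.
Qed.

Lemma regular_gyo (T : finType) (s : seq {set {set T}}) (M : {set {set T}}) :
  antichain M -> nonemp M -> path (@normal_step T) (down_closure M) s ->
  last (down_closure M) s == set0 -> gyo M.
Proof.
elim: s M => [|K s IH] M HA HN /=.
- move=> _ /eqP e.
  have -> : M = set0.
    apply/setP => X; rewrite inE; apply/negP => HX.
    have : X \in down_closure M by apply/in_down; split; [apply: HN | exists X].
    by rewrite e inE.
  exact: gyo0.
- case/andP => /existsP [X /andP[Hex /eqP eK]] Hp Hl.
  case: (extreme_ear HA HN Hex) => HX [->|Hear]; first exact: gyo1.
  apply: (gyoS Hear); apply: IH (antichainD1 (X:=X) HA) (nonempD1 (X:=X) HN) _ _.
    by rewrite -normal_ear // -eK.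
  by rewrite -normal_ear // -eK.
Qed.

Lemma card_le1_eq (T : finType) (F : {set {set T}}) A B :
  #|F| <= 1 -> A \in F -> B \in F -> A = B.
Proof.
move=> H HA HB; apply/eqP; apply: contraLR H => ne; rewrite -ltnNge.
by apply/card_gt1P; exists A, B.
Qed.

Lemma ear_two (T : finType) (F : {set {set T}}) E1 E2 :
  E1 \in F -> E2 \in F -> E2 != E1 -> (forall Z, Z \in F -> Z = E1 \/ Z = E2) ->
  ear F E1.
Proof.
move=> H1 H2 ne H; split => //; exists E2; split => // Z HZ ZE.
case: (H _ HZ) => e; first by rewrite e eqxx in ZE.
by rewrite e subsetIr.
Qed.

Lemma red_ind_elem (T : finType) W (E : {set {set T}}) Z :
  Z \in red (ind W E) -> Z != set0 /\ exists2 G, G \in E & Z = G :&: W.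
Proof. by move=> /red_subE /in_ind. Qed.

Lemma gyo_Q (T : finType) (M : {set {set T}}) : gyo M ->
  forall W, 1 < #|red (ind W M)| -> forall A, A \in red (ind W M) ->
  exists X, [/\ X \in red (ind W M), X != A & ear (red (ind W M)) X].
Proof.
elim => {M}.
- move=> W; have -> : red (ind W set0) = set0.
    apply/setP => Z; rewrite in_set0; apply/negP => /red_ind_elem [_ [G]]; by rewrite in_set0.
  by rewrite cards0.
- move=> X W H; exfalso; move: H; apply/negP; rewrite -leqNgt.
  have : red (ind W [set X]) \subset [set X :&: W].
    apply/subsetP => Z /red_ind_elem [_ [G /set1P -> ->]]; exact: set11.
  by move/subset_leq_card; rewrite cards1.
- move=> M X [HX [Y [HY YX HE]]] _ IH W HF A HA.
  set M' := M :\ X.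
  set F := red (ind W M); set F' := red (ind W M').
  set X' := X :&: W; set J := Y :&: W.
  have HYM' : Y \in M' by rewrite !inE YX.
  have sub_ind : ind W M' \subset ind W M.
    apply/subsetP => Z /in_ind [H1 [G HG eZ]]; apply/in_ind; split => //.
    by exists G => //; case/setD1P: HG.
  case: (boolP ((X' == set0) || [exists G in M', X' \subset G :&: W])) => Habs.
  +
    have eF : F = F'.
      apply: red_eq => // Z /in_ind [H1 [G HG eZ]].
      case: (eqVneq G X) => [eGX|nGX].
      * subst G; case/orP: Habs => [/eqP e|/existsP [G' /andP[HG' sub]]].
          by move: H1; rewrite eZ -/X' e eqxx.
        exists (G' :&: W); last by rewrite eZ.
        apply/in_ind; split; last by exists G'.
        apply/negP => /eqP e; move: H1; rewrite eZ; apply/negP; rewrite negbK.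
        by rewrite -subset0 -e.
      * exists Z => //; apply/in_ind; split => //; exists G => //.
        by rewrite !inE nGX.
    move: HF HA; rewrite -/F eF => HF HA.
    by apply: IH.
  +
    rewrite negb_or in Habs; case/andP: Habs => X'n0 Hna.
    have Hna' : forall G, G \in M' -> ~~ (X' \subset G :&: W).
      by move=> G HG; apply: contra Hna => H; apply/existsP; exists G; rewrite HG.
    have X'ind : X' \in ind W M by apply/in_ind; split => //; exists X.
    have X'F : X' \in F.
      rewrite /F in_red X'ind; apply/forallP => Z; apply/implyP => /in_ind [_ [G HG eZ]].
      apply/negP => pr.
      case: (eqVneq G X) => [eGX|nGX].
        by subst G; move: pr; rewrite eZ -/X' properE subxx andbF.
      have HGM : G \in M' by rewrite !inE nGX HG.
      by move: (Hna' G HGM); rewrite -eZ (proper_sub pr).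
    have X'nF' : X' \notin F'.
      apply/negP => /red_ind_elem [_ [G HG eZ]].
      by move: (Hna' G HG); rewrite -eZ subxx.
    have Fa : forall Z, Z \in F -> Z != X' -> Z \in F'.
      move=> Z HZ ZX'; have HZi := red_subE HZ.
      case/in_ind: (HZi) => H1 [G HG eZ].
      have GX : G != X by apply: contraNneq ZX' => e; rewrite eZ e.
      have HZi' : Z \in ind W M' by apply/in_ind; split => //; exists G => //; rewrite !inE GX.
      rewrite /F' in_red HZi'; apply/forallP => Z2; apply/implyP => HZ2.
      move: HZ; rewrite /F in_red => /andP[_ /forallP Hm].
      by have := Hm Z2; rewrite (subsetP sub_ind _ HZ2).
    have Fb : forall Z, Z \in F' -> ~~ (Z \subset X') -> Z \in F.
      move=> Z HZ ZX'; have HZi := red_subE HZ.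
      rewrite /F in_red (subsetP sub_ind _ HZi); apply/forallP => Z2; apply/implyP => HZ2.
      apply/negP => pr.
      case/in_ind: (HZ2) => H2 [G HG eZ2].
      case: (eqVneq G X) => [eGX|nGX].
        by subst G; move: ZX'; rewrite /X' -eZ2 (proper_sub pr).
      have HZ2' : Z2 \in ind W M' by apply/in_ind; split => //; exists G => //; rewrite !inE nGX.
      move: HZ; rewrite /F' in_red => /andP[_ /forallP Hm].
      by have := Hm Z2; rewrite HZ2' pr.
    have Fc : forall Z, Z \in F' -> X' :&: Z \subset J.
      move=> Z /red_ind_elem [_ [G HG ->]].
      case/setD1P: HG => GX HG.
      rewrite /X' /J setIACA setIid subsetI subsetIr andbT.
      exact: subset_trans (subsetIl _ _) (HE _ HG GX).
    have Fd : forall Z, Z \in F' -> Z \subset X' -> Z \subset J.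
      by move=> Z HZ ZX'; move: (Fc _ HZ); rewrite (setIidPr ZX').
    have F'anti := @red_anti _ (ind W M').
    have Fanti := @red_anti _ (ind W M).
    have [B HB JB] : exists2 B, B \in F' & J \subset B.
      case: (eqVneq J set0) => [J0|Jn0].
        case/card_gt1P: HF => Z1 [Z2 [HZ1 HZ2 ne]].
        have [Z HZ ZX'] : exists2 Z, Z \in F & Z != X'.
          case: (eqVneq Z1 X') => [e|n]; last by exists Z1.
          by exists Z2 => //; rewrite -e eq_sym.
        by exists Z; [apply: Fa | rewrite J0 sub0set].
      have HJ : J \in ind W M' by apply/in_ind; split => //; exists Y.
      by case: (red_cover HJ) => B HB JB; exists B.
    have lift : forall E1, E1 \in F' -> E1 != B -> ear F' E1 ->
        E1 \in F /\ ear F E1.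
      move=> E1 HE1 E1B [_ [Z1 [HZ1 Z1E1 HE1e]]].
      have E1F : E1 \in F.
        apply: Fb => //; apply/negP => E1X'.
        by move: E1B; rewrite (F'anti _ _ HE1 HB (subset_trans (Fd _ HE1 E1X') JB)) eqxx.
      split => //; split => //.
      have E1X' : E1 != X' by apply: contraNneq X'nF' => <-.
      have keyX : E1 :&: X' \subset Z1.
        have BE1 : B != E1 by rewrite eq_sym.
        apply: subset_trans (HE1e _ HB BE1).
        by rewrite subsetI subsetIl /= setIC (subset_trans (Fc _ HE1) JB).
      case: (boolP (Z1 \subset X')) => Z1X'.
      * exists X'; split => //; first by rewrite eq_sym.
        move=> Z HZ ZE1; case: (eqVneq Z X') => [->|ZX']; first exact: subsetIr.
        exact: subset_trans (HE1e _ (Fa _ HZ ZX') ZE1) Z1X'.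
      * exists Z1; split => //; first exact: Fb.
        move=> Z HZ ZE1; case: (eqVneq Z X') => [->|ZX'] //.
        exact: HE1e _ (Fa _ HZ ZX') ZE1.
    have F'n : forall Z, Z \in F -> Z != X' -> 1 < #|F'| \/ (forall Z2, Z2 \in F' -> Z2 = Z).
      move=> Z HZ ZX'; case: (leqP #|F'| 1) => Hc; last by left.
      by right => Z2 HZ2; apply: card_le1_eq Hc HZ2 (Fa _ HZ ZX').
    have [Z0 HZ0 Z0X'] : exists2 Z, Z \in F & Z != X'.
      case/card_gt1P: HF => Z1 [Z2 [HZ1 HZ2 ne]].
      case: (eqVneq Z1 X') => [e|n]; last by exists Z1.
      by exists Z2 => //; rewrite -e eq_sym.
    case: (F'n _ HZ0 Z0X') => [HF'|Hone].
    *
      case: (boolP (B \subset X')) => BX'.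
      -
        case: (IH W HF' B HB) => E1 [HE1 E1B earE1].
        case: (lift _ HE1 E1B earE1) => E1F earF1.
        case: (eqVneq E1 A) => [eA|nA]; last by exists E1.
        subst A.
        case: (IH W HF' E1 HE1) => E2 [HE2 E2E1 earE2].
        case: (eqVneq E2 B) => [eB|nB]; last first.
          by case: (lift _ HE2 nB earE2) => E2F earF2; exists E2.
        subst E2; case: earE2 => _ [Z2 [HZ2 Z2B HZ2e]].
        exists X'; split => //; first by apply: contraNneq X'nF' => ->.
        split => //; exists Z2; split.
        + apply: Fb => //; apply/negP => Z2X'.
          by move: Z2B; rewrite (F'anti _ _ HZ2 HB (subset_trans (Fd _ HZ2 Z2X') JB)) eqxx.
        + by apply: contraNneq X'nF' => <-.
        + move=> Z HZ ZX'; have HZ' := Fa _ HZ ZX'.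
          have ZB : Z != B.
            apply/eqP => e; subst Z.
            move: HZ; rewrite /F in_red => /andP[_ /forallP Hm].
            have := Hm X'; rewrite X'ind /= properEneq BX' andbT negbK => /eqP e.
            by move: X'nF'; rewrite -e HB.
          apply: subset_trans (HZ2e _ HZ' ZB).
          rewrite subsetI subsetIr andbT.
          exact: subset_trans (Fc _ HZ') JB.
      -
        have BF := Fb _ HB BX'.
        have earX' : ear F X'.
          split => //; exists B; split => //; first by apply: contraNneq X'nF' => <-.
          move=> Z HZ ZX'; exact: subset_trans (Fc _ (Fa _ HZ ZX')) JB.
        case: (eqVneq X' A) => [eA|nA]; last by exists X'.
        subst A.
        case: (IH W HF' B HB) => E1 [HE1 E1B earE1].
        case: (lift _ HE1 E1B earE1) => E1F earF1.
        by exists E1; split => //; apply: contraNneq X'nF' => <-.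
    *
      have HBF : forall Z, Z \in F -> Z = X' \/ Z = B.
        move=> Z HZ; case: (eqVneq Z X') => [->|ZX']; [by left|right].
        by rewrite (Hone _ (Fa _ HZ ZX')) (Hone _ HB).
      have BF : B \in F.
        case: (HBF _ HZ0) => e; first by rewrite e eqxx in Z0X'.
        by rewrite -e.
      have BX' : B != X' by apply: contraNneq X'nF' => <-.
      case: (eqVneq X' A) => [eA|nA].
      - subst A; exists B; split => //.
        apply: (ear_two BF X'F) => //; first by rewrite eq_sym.
        by move=> Z HZ; case: (HBF _ HZ) => ->; [right|left].
      - exists X'; split => //.
        by apply: (ear_two X'F BF).
Qed.

Lemma adjP (T : finType) (E : {set {set T}}) x y :
  reflect (exists2 D, D \in E & (x \in D) && (y \in D)) (adj E x y).
Proof. by apply: (iffP existsP) => [[D /andP[]]|[D H1 H2]]; exists D => //; rewrite H1. Qed.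

Lemma hconn_closed (T : finType) (E : {set {set T}}) (A : {set T}) :
  (forall x y, x \in A -> adj E x y -> y \in A) ->
  forall x y, x \in A -> connect (adj E) x y -> y \in A.
Proof.
move=> H x y xA /connectP [p Hp ->]; elim: p x xA Hp => //= z p IH x xA /andP[xz Hp].
exact: IH (H _ _ xA xz) Hp.
Qed.

Lemma ncomp_gt1 (T : finType) (V : {set T}) (E : {set {set T}}) x1 x2 :
  x1 \in V -> x2 \in V -> ~~ connect (adj E) x1 x2 -> 1 < ncomp V E.
Proof.
move=> H1 H2 nc; rewrite /ncomp /comps; apply/card_gt1P.
exists [set y in V | connect (adj E) x1 y], [set y in V | connect (adj E) x2 y].
split.
- by apply/imsetP; exists x1.
- by apply/imsetP; exists x2.
apply/eqP => /setP /(_ x2); rewrite !inE H2 connect0 /=.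
by move=> e; move: nc; rewrite e.
Qed.

Lemma ear_articulation (T : finType) (E0 : {set {set T}}) W X :
  hconnected W (red (ind W E0)) -> 1 < #|red (ind W E0)| ->
  ear (red (ind W E0)) X -> has_articulation W (red (ind W E0)).
Proof.
set F := red (ind W E0) => Hc Hcard [HX [Z [HZ ZX HE]]].
have Fanti := @red_anti _ (ind W E0).
have Fsub : forall G, G \in F -> G \subset W.
  by move=> G /red_ind_elem [_ [G' _ ->]]; rewrite subsetIr.
have Fne : forall G, G \in F -> G != set0.
  by move=> G /red_ind_elem [].
have XZ : ~~ (X \subset Z).
  by apply/negP => s; move: ZX; rewrite (Fanti _ _ HX HZ s) eqxx.
have ZX' : ~~ (Z \subset X).
  by apply/negP => s; move: ZX; rewrite (Fanti _ _ HZ HX s) eqxx.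
have Sn0 : X :&: Z != set0.
  apply/negP => /eqP S0.
  have [G HG GX] : exists2 G, G \in F & G != X.
    case/card_gt1P: Hcard => Z1 [Z2 [HZ1 HZ2 ne]].
    case: (eqVneq Z1 X) => [e|n]; last by exists Z1.
    by exists Z2 => //; rewrite -e eq_sym.
  have GX' : ~~ (G \subset X).
    by apply/negP => s; move: GX; rewrite (Fanti _ _ HG HX s) eqxx.
  case/set0Pn: (Fne _ HX) => x1 x1X.
  case/subsetPn: GX' => x2 x2G x2X.
  have : 1 < ncomp W F.
    apply: (ncomp_gt1 (x1 := x1) (x2 := x2)).
    - exact: subsetP (Fsub _ HX) _ x1X.
    - exact: subsetP (Fsub _ HG) _ x2G.
    apply/negP => Hcon; move: x2X; apply/negP; rewrite negbK.
    apply: (hconn_closed _ x1X Hcon).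
    move=> x y xX /adjP [D HD /andP[xD yD]].
    case: (eqVneq D X) => [<- //|DX].
    have : x \in X :&: Z by rewrite inE xX (subsetP (HE _ HD DX)) // inE xX xD.
    by rewrite S0 inE.
  by move: Hc; rewrite /hconnected => /eqP ->.
apply/existsP; exists X; apply/existsP; exists Z.
rewrite /articulation HX HZ (eq_sym X) ZX Sn0 /=.
move: Hc; rewrite /hconnected => /eqP ->.
case/subsetPn: XZ => x1 x1X x1Z.
case/subsetPn: ZX' => x2 x2Z x2X.
have HW1 : x1 \in W :\: (X :&: Z).
  by rewrite !inE (negbTE x1Z) andbF /= (subsetP (Fsub _ HX) _ x1X).
have HW2 : x2 \in W :\: (X :&: Z).
  by rewrite !inE (negbTE x2X) /= (subsetP (Fsub _ HZ) _ x2Z).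
apply: (ncomp_gt1 HW1 HW2).
have x1A : x1 \in X :\: (X :&: Z) by rewrite !inE (negbTE x1Z) x1X.
apply/negP => Hcon.
suff : x2 \in X :\: (X :&: Z) by rewrite !inE (negbTE x2X) /= ?andbF.
apply: (hconn_closed _ x1A Hcon).
move=> x y /setDP [xX xS] /adjP [D HD /andP[xD yD]].
case/red_ind_elem: HD => _ [G HG eD]; subst D.
move: xD yD; rewrite !inE => /andP[xG _] /and3P[yG yS yW].
case: (eqVneq G X) => [eGX|GX].
  by subst G; rewrite yS yG.
exfalso; move: xS; apply/negP; rewrite negbK.
by rewrite inE xX (subsetP (HE _ HG GX)) // inE xX xG.
Qed.

Lemma gyo_acyclic (T : finType) (V : {set T}) (M : {set {set T}}) :
  gyo M -> acyclic_reduced V M.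
Proof.
move=> Hg W _ Hc Hcard.
case/card_gt1P: (Hcard) => A [_ [HA _ _]].
case: (gyo_Q Hg Hcard HA) => X [HX _ earX].
exact: ear_articulation Hc Hcard earX.
Qed.

Lemma adj_csym (T : finType) (E : {set {set T}}) : connect_sym (adj E).
Proof.
apply: sym_connect_sym => x y.
by apply/adjP/adjP => -[D HD /andP[a b]]; exists D => //; rewrite a b.
Qed.

Lemma ncomp_gt1_inv (T : finType) (V : {set T}) (E : {set {set T}}) :
  1 < ncomp V E -> exists x1 x2, [/\ x1 \in V, x2 \in V & ~~ connect (adj E) x1 x2].
Proof.
rewrite /ncomp /comps => /card_gt1P [C1 [C2 [/imsetP [x1 Hx1 ->] /imsetP [x2 Hx2 ->] ne]]].
exists x1, x2; split => //; apply/negP => Hc; move: ne; apply/negP; rewrite negbK.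
apply/eqP/setP => y; rewrite !inE; case: (y \in V) => //=.
apply/idP/idP => H.
- by apply: connect_trans H; rewrite adj_csym.
- exact: connect_trans Hc H.
Qed.

Lemma ind_id (T : finType) (W : {set T}) (H : {set {set T}}) :
  (forall G, G \in H -> G \subset W) -> nonemp H -> ind W H = H.
Proof.
move=> Hs Hn; apply/setP => Z; apply/in_ind/idP => [[_ [G HG ->]]|HZ].
  by rewrite (setIidPl (Hs _ HG)).
by split; [exact: Hn | exists Z => //; rewrite (setIidPl (Hs _ HZ))].
Qed.

Lemma ear_exists (T : finType) (V : {set T}) (E0 : {set {set T}}) :
  acyclic_reduced V E0 ->
  forall n (W : {set T}), #|W| <= n -> W \subset V ->
  (forall w, w \in W -> exists2 G, G \in red (ind W E0) & w \in G) ->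
  1 < #|red (ind W E0)| -> forall A, A \in red (ind W E0) ->
  exists X, [/\ X \in red (ind W E0), X != A & ear (red (ind W E0)) X].
Proof.
move=> Hac; elim=> [|n IH] W HWn HWV Hcov Hcard A HA.
  case/card_gt1P: Hcard => Z [_ [HZ _ _]].
  case/red_ind_elem: HZ => Zn0 [G _ eZ].
  case/set0Pn: Zn0 => z; rewrite eZ inE => /andP[_ zW].
  by move: HWn; rewrite leqn0 => /eqP/cards0_eq W0; rewrite W0 inE in zW.
set H := red (ind W E0).
have Hanti : antichain H := @red_anti _ _.
have Hsub : forall G, G \in H -> G \subset W.
  by move=> G /red_ind_elem [_ [G' _ ->]]; rewrite subsetIr.
have Hne : nonemp H by move=> G /red_ind_elem [].
have [S [X [Y [x1 [x2 [HX HY XY SXY [Hx1 Hx2 nc]]]]]]] : exists (S : {set T}) (X Y : {set T}) (x1 x2 : T),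
  [/\ X \in H, Y \in H, X != Y, S \subset X :&: Y &
   [/\ x1 \in W :\: S, x2 \in W :\: S & ~~ connect (adj (red (ind (W :\: S) H))) x1 x2]].
  case: (boolP (hconnected W H)) => Hc.
  - have := Hac W HWV Hc Hcard => /existsP [X /existsP [Y]].
    case/and5P => HX HY XY _ Hlt.
    move: Hc; rewrite /hconnected => /eqP e; rewrite e in Hlt.
    case: (ncomp_gt1_inv Hlt) => x1 [x2 [H1 H2 H3]].
    by exists (X :&: Y), X, Y, x1, x2; split.
  - have Wn0 : W != set0.
      case/card_gt1P: Hcard => Z [_ [HZ _ _]].
      case/set0Pn: (Hne _ HZ) => z zZ; apply/set0Pn; exists z.
      exact: subsetP (Hsub _ HZ) _ zZ.
    have Hlt : 1 < ncomp W H.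
      move: Hc; rewrite /hconnected /ncomp ltn_neqAle eq_sym => -> /=.
      rewrite card_gt0; case/set0Pn: Wn0 => w wW; apply/set0Pn.
      by exists [set y in W | connect (adj H) w y]; apply/imsetP; exists w.
    case: (ncomp_gt1_inv Hlt) => x1 [x2 [H1 H2 H3]].
    case/card_gt1P: Hcard => X [Y [HX HY XY]].
    exists set0, X, Y, x1, x2; split => //; rewrite ?sub0set ?setD0 //.
    by rewrite ind_id // red_id.
have SX : S \subset X by apply: subset_trans SXY (subsetIl _ _).
have SY : S \subset Y by apply: subset_trans SXY (subsetIr _ _).
set S' := W :\: S.
set H2 := red (ind S' H).
have same : forall G, G \in H -> forall u v, u \in G -> v \in G -> u \notin S -> v \notin S ->
    adj H2 u v.
  move=> G HG u v uG vG uS vS.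
  have Gi : G :&: S' \in ind S' H.
    apply/in_ind; split; last by exists G.
    apply/set0Pn; exists u; rewrite !inE uG uS /=; exact: subsetP (Hsub _ HG) _ uG.
  case: (red_cover Gi) => D HD GD; apply/adjP; exists D => //.
  rewrite (subsetP GD u) ?(subsetP GD v) // !inE ?uG ?vG ?uS ?vS /=.
    exact: subsetP (Hsub _ HG) _ vG.
  exact: subsetP (Hsub _ HG) _ uG.
pose comp x := [set y in S' | connect (adj H2) x y].
have prop : forall x G, G \in H -> forall g v, g \in comp x -> g \in G -> v \in G -> v \notin S ->
    v \in comp x.
  move=> x G HG g v; rewrite !inE => /andP[/andP[gS gW] cg] gG vG vS.
  rewrite vS (subsetP (Hsub _ HG) _ vG) /=.
  by apply: connect_trans cg (connect1 (same _ HG _ _ gG vG gS vS)).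
have [c [d [HcS HdS dC AC]]] : exists c d, [/\ c \in S', d \in S', d \notin comp c &
    forall a, a \in A -> a \notin comp c].
  case: (boolP [exists a in A, a \in comp x1]) => Hex; last first.
    exists x1, x2; split => //.
      by rewrite inE Hx2 /=.
    by move=> a aA; apply: contra Hex => ac; apply/existsP; exists a; rewrite aA.
  case/existsP: Hex => a1 /andP[a1A a1c].
  exists x2, x1; split => //.
    by rewrite inE Hx1 /= adj_csym.
  move=> a aA; apply/negP => ac.
  have a1S : a1 \notin S by move: a1c; rewrite !inE => /andP[/andP[]].
  have aS : a \notin S by move: ac; rewrite !inE => /andP[/andP[]].
  have := prop _ _ HA _ _ a1c a1A aA aS; rewrite inE => /andP[_ c1].
  move: ac; rewrite inE => /andP[_ c2].
  move: nc; apply/negP; rewrite negbK.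
  by apply: connect_trans c1 _; rewrite adj_csym.
set C := comp c.
have CS' : C \subset S' by apply/subsetP => y; rewrite inE => /andP[].
have cC : c \in C by rewrite inE HcS connect0.
have Cl : forall G, G \in H -> forall g, g \in G -> g \in C -> G \subset C :|: S.
  move=> G HG g gG gC; apply/subsetP => v vG; rewrite inE.
  case: (boolP (v \in S)) => vS; first by rewrite orbT.
  by rewrite (prop _ _ HG _ _ gC gG vG vS).
set W' := C :|: S.
have SX' : S \subset W by apply: subset_trans SX (Hsub _ HX).
have W'W : W' \subset W.
  by rewrite subUset SX' (subset_trans CS') // subsetDl.
have W'lt : #|W'| <= n.
  have : W' \proper W.
    rewrite properE W'W; apply/subsetPn; exists d.
      by move: HdS; rewrite inE => /andP[].
    rewrite inE negb_or dC /=; by move: HdS; rewrite inE => /andP[].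
  by move/proper_card => H'; rewrite -ltnS (leq_trans H').
have eH' : red (ind W' E0) = red (ind W' H) by rewrite red_ind_comp.
set H' := red (ind W' H).
have H'anti : antichain H' := @red_anti _ _.
have Cov' : forall w, w \in W' -> exists2 G, G \in H' & w \in G.
  move=> w; rewrite inE => /orP[wC|wS].
  - have wW : w \in W by apply: (subsetP W'W); rewrite inE wC.
    case: (Hcov _ wW) => G HG wG.
    have GW' := Cl _ HG _ wG wC.
    have Gi : G \in ind W' H.
      apply/in_ind; split; last by exists G => //; rewrite (setIidPl GW').
      by apply/set0Pn; exists w.
    by case: (red_cover Gi) => D HD GD; exists D => //; apply: (subsetP GD).
  - have Xi : X :&: W' \in ind W' H.
      apply/in_ind; split; last by exists X.
      by apply/set0Pn; exists w; rewrite !inE (subsetP SX _ wS) wS orbT.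
    case: (red_cover Xi) => D HD XD; exists D => //; apply: (subsetP XD).
    by rewrite !inE (subsetP SX _ wS) wS orbT.
have cW : c \in W by move: HcS; rewrite inE => /andP[].
case: (Hcov _ cW) => G0 HG0 cG0.
have G0W' := Cl _ HG0 _ cG0 cC.
have ACd : forall G, G \in H -> forall g, g \in G -> g \in C -> G != A.
  by move=> G HG g gG gC; apply/eqP => e; subst G; move: (AC _ gG); rewrite gC.
case: (leqP #|H'| 1) => Hc1.
-
  have uniq : forall G, G \in H -> forall g, g \in G -> g \in C -> G = G0.
    move=> G HG g gG gC.
    have GW' := Cl _ HG _ gG gC.
    have Gi : G \in ind W' H.
      by apply/in_ind; split; [apply/set0Pn; exists g | exists G => //; rewrite (setIidPl GW')].
    have G0i : G0 \in ind W' H.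
      by apply/in_ind; split; [apply/set0Pn; exists c | exists G0 => //; rewrite (setIidPl G0W')].
    case: (red_cover Gi) => D HD GD; case: (red_cover G0i) => D0 HD0 G0D0.
    have eD := card_le1_eq Hc1 HD HD0; subst D0.
    case/red_ind_elem: HD => _ [G1 HG1 eD].
    have GG1 : G \subset G1 by apply: subset_trans GD _; rewrite eD subsetIl.
    have G0G1 : G0 \subset G1 by apply: subset_trans G0D0 _; rewrite eD subsetIl.
    by rewrite (Hanti _ _ HG HG1 GG1) (Hanti _ _ HG0 HG1 G0G1).
  exists G0; split => //; first exact: ACd HG0 _ cG0 cC.
  split => //.
  have [W0 [HW0 W0G0 SW0]] : exists W0, [/\ W0 \in H, W0 != G0 & S \subset W0].
    case: (eqVneq X G0) => [eX|nX]; last by exists X.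
    by exists Y; split => //; rewrite -eX eq_sym.
  exists W0; split => // Z HZ ZG0; apply/subsetP => v; rewrite inE => /andP[vG0 vZ].
  move: (subsetP G0W' _ vG0); rewrite inE => /orP[vC|vS]; last exact: (subsetP SW0).
  by move: ZG0; rewrite (uniq _ HZ _ vZ vC) eqxx.
-
  have [B' HB' SB'] : exists2 B', B' \in H' & S \subset B'.
    case: (eqVneq S set0) => [S0|Sn0].
      by case/card_gt1P: Hc1 => B [_ [HB _ _]]; exists B => //; rewrite S0 sub0set.
    have Xi : X :&: W' \in ind W' H.
      apply/in_ind; split; last by exists X.
      case/set0Pn: Sn0 => s sS; apply/set0Pn; exists s.
      by rewrite !inE (subsetP SX _ sS) sS orbT.
    case: (red_cover Xi) => D HD XD; exists D => //.
    apply: subset_trans XD; rewrite subsetI SX subsetUr //.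
  have HW'V : W' \subset V by apply: subset_trans W'W HWV.
  have Cov'' : forall w, w \in W' -> exists2 G, G \in red (ind W' E0) & w \in G.
    by rewrite eH'.
  have Hc1' : 1 < #|red (ind W' E0)| by rewrite eH'.
  have HB'' : B' \in red (ind W' E0) by rewrite eH'.
  case: (IH W' W'lt HW'V Cov'' Hc1' B' HB'') => X''; rewrite eH'.
  move=> [HX'' X''B' [_ [Z' [HZ' Z'X'' HE']]]].
  case/red_ind_elem: (HX'') => X''n0 [G HG eX''].
  have [v vX'' vC] : exists2 v, v \in X'' & v \in C.
    apply/exists_inP; apply: contraR X''B' => Hn.
    apply/eqP; apply: H'anti HX'' HB' _.
    apply: subset_trans SB'; apply/subsetP => u uX''.
    have : u \in W' by rewrite eX'' in uX''; move: uX''; rewrite inE => /andP[].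
    rewrite inE => /orP[uC|//].
    by exfalso; move/exists_inP: Hn; apply; exists u.
  have vG : v \in G by move: vX''; rewrite eX'' inE => /andP[].
  have GW' := Cl _ HG _ vG vC.
  have eG : X'' = G by rewrite eX'' (setIidPl GW').
  rewrite eG in HX'' X''B' HE' Z'X'' vX''.
  exists G; split => //; first exact: ACd HG _ vG vC.
  split => //.
  case/red_ind_elem: (HZ') => _ [G3 HG3 eZ'].
  exists G3; split => //.
    apply/eqP => e; subst G3; move: Z'X''; rewrite eZ' (setIidPl GW') eqxx //.
  move=> Z HZ ZG; apply/subsetP => u; rewrite inE => /andP[uG uZ].
  have uW' : u \in W' by apply: (subsetP GW').
  have Zi : Z :&: W' \in ind W' H.
    by apply/in_ind; split; [apply/set0Pn; exists u; rewrite inE uZ uW' | exists Z].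
  case: (red_cover Zi) => D HD ZD.
  have uD : u \in D by apply: (subsetP ZD); rewrite inE uZ uW'.
  have Z'G3 : Z' \subset G3 by rewrite eZ' subsetIl.
  case: (eqVneq D G) => [eDG|DG]; last first.
    by apply: (subsetP Z'G3); apply: (subsetP (HE' _ HD DG)); rewrite inE uG uD.
  subst D.
  have uS : u \in S.
    move: uW'; rewrite inE => /orP[uC|//].
    have ZW' := Cl _ HZ _ uZ uC.
    have ZsubG : Z \subset G by apply: subset_trans ZD; rewrite (setIidPl ZW').
    by move: ZG; rewrite (Hanti _ _ HZ HG ZsubG) eqxx.
  have B'G : B' != G by rewrite eq_sym.
  apply: (subsetP Z'G3); apply: (subsetP (HE' _ HB' B'G)).
  by rewrite inE uG (subsetP SB').
Qed.

Lemma acyclic_sub (T : finType) (V W0 : {set T}) (M : {set {set T}}) :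
  acyclic_reduced V M -> W0 \subset V -> acyclic_reduced W0 (red (ind W0 M)).
Proof.
move=> Hac sW0 W sW; rewrite red_ind_comp //; apply: Hac.
exact: subset_trans sW sW0.
Qed.

Lemma remove_ear (T : finType) (V : {set T}) (M : {set {set T}}) X :
  antichain M -> nonemp M -> (forall G, G \in M -> G \subset V) -> ear M X ->
  let W0 := V :\: (X :\: \bigcup_(G in M :\ X) G) in
  red (ind W0 M) = M :\ X /\ (forall G, G \in M :\ X -> G \subset W0).
Proof.
move=> HA HN HV [HX [Y [HY YX HE]]] W0.
have sub0 : forall G, G \in M :\ X -> G \subset W0.
  move=> G HG; apply/subsetP => v vG; rewrite !inE negb_and negbK.
  rewrite (subsetP (HV _ (setD1P HG).2) _ vG) andbT; apply/orP; left.
  by apply/bigcupP; exists G.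
split => //.
rewrite -[RHS]red_id; last exact: antichainD1.
apply: red_eq.
- apply/subsetP => G HG; apply/in_ind; split; first exact: (nonempD1 (X:=X) HN HG).
  exists G; first by case/setD1P: HG.
  by rewrite (setIidPl (sub0 _ HG)).
- move=> Z /in_ind [Zn0 [G HG eZ]].
  case: (eqVneq G X) => [eGX|GX]; last first.
    have HG' : G \in M :\ X by rewrite !inE GX.
    by exists G => //; rewrite eZ subsetIl.
  subst G; exists Y; first by rewrite !inE YX.
  apply/subsetP => v; rewrite eZ !inE => /andP[vX /andP[]].
  rewrite negb_and negbK vX orbF => /bigcupP [G HG2 vG] _.
  case/setD1P: HG2 => GX HG2.
  by apply: (subsetP (HE _ HG2 GX)); rewrite inE vX vG.
Qed.

Lemma acyclic_gyo (T : finType) n (M : {set {set T}}) (V : {set T}) :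
  #|M| <= n -> antichain M -> nonemp M -> (forall G, G \in M -> G \subset V) ->
  acyclic_reduced V M -> gyo M.
Proof.
elim: n M V => [|n IH] M V Hn HA HN HV Hac.
  by move: Hn; rewrite leqn0 => /eqP/cards0_eq ->; exact: gyo0.
case: (leqP #|M| 1) => H1.
  case: (posnP #|M|) => [/cards0_eq ->|Hp]; first exact: gyo0.
  have : #|M| == 1 by rewrite eqn_leq H1 Hp.
  by case/cards1P => X ->; exact: gyo1.
set W := \bigcup_(G in M) G.
have HWV : W \subset V by apply/bigcupsP.
have eM : red (ind W M) = M.
  rewrite ind_id //; first exact: red_id.
  by move=> G HG; exact: bigcup_sup.
case/card_gt1P: (H1) => A [_ [HA' _ _]].
have Hcov : forall w, w \in W -> exists2 G, G \in red (ind W M) & w \in G.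
  by rewrite eM => w /bigcupP [G HG wG]; exists G.
have Hc : 1 < #|red (ind W M)| by rewrite eM.
have HA'' : A \in red (ind W M) by rewrite eM.
case: (ear_exists Hac (leqnn #|W|) HWV Hcov Hc HA'') => X; rewrite eM.
move=> [HX _ earX].
case: (remove_ear HA HN HV earX) => eR sub0.
apply: (gyoS earX).
move: eR sub0; set W0 := V :\: _ => eR sub0.
have Hac' : acyclic_reduced W0 (M :\ X).
  by rewrite -eR; apply: acyclic_sub Hac (subsetDl _ _).
apply: (IH _ W0).
- by move: Hn; rewrite (cardsD1 X) HX.
- exact: antichainD1.
- exact: nonempD1.
- exact: sub0.
- exact: Hac'.
Qed.

Unset Implicit Arguments. Set Strict Implicit.

Theorem corollary2 (T : finType) (V : {set T}) (E : {set {set T}}) :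
  hypergraph V E -> (acyclic V E <-> vorobev_regular E).
Proof.
move=> /forallP Hh.
have HA : antichain (red E) := @red_anti _ _.
have HN : nonemp (red E).
  by move=> X /red_subE HX; case/andP: (implyP (Hh X) HX).
have HV : forall G, G \in red E -> G \subset V.
  by move=> X /red_subE HX; case/andP: (implyP (Hh X) HX).
rewrite /acyclic /vorobev_regular -down_red; split => H.
- apply: (gyo_regular HA HN).
  exact: (acyclic_gyo (leqnn _) HA HN HV H).
- case: H => s /andP[/andP[Hp _] Hl].
  apply: gyo_acyclic; exact: (regular_gyo HA HN Hp Hl).
Qed.
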